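(* Let $k,l\ge1$ and $1\le r\le 2k(2l+1)$. Let $\overline{\mathcal{B}}(2k,2l+1;r)$ be the subset of $\mathcal{B}(2k,2l+1;r)$ consisting of boards whose board partition $(\lambda_1,\lambda_2,\lambda_3,\lambda_4,\delta_1,\delta_2)$ satisfies: (i) $\lambda_1\ge\lambda_i$ for all $i>1$; (ii) if $\lambda_1=\lambda_2$ then $\lambda_3\ge\lambda_4$; (iii) if $\lambda_1=\lambda_3$ then $\lambda_2\ge\lambda_4$, and if in addition $\lambda_2=\lambda_4$ then $\delta_1\ge\delta_2$; (iv) if $\lambda_1=\lambda_4$ then $\lambda_2\ge\lambda_3$, and if in addition $\lambda_2=\lambda_3$ then $\delta_1\ge\delta_2$. Then: (1) $\overline{\mathcal{B}}(2k,2l+1;r)$ is a disjoint union of sets each consisting of all boards in $\mathcal{B}(2k,2l+1;r)$ with some fixed board partition; (2) every board of $\mathcal{B}(2k,2l+1;r)$ is equivalent under $\langle H,V\rangle$ to some board of $\overline{\mathcal{B}}(2k,2l+1;r)$; (3) if two boards of $\overline{\mathcal{B}}(2k,2l+1;r)$ are equivalent under $\langle H,V\rangle$, they have the same board partition.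
   Context: A $2k\times(2l+1)$ grid ($2k$ rows numbered top to bottom, $2l+1$ columns numbered left to right); $\mathcal{B}(2k,2l+1;r)$ is the set of boards, i.e. subsets of exactly $r$ blocked cells. The symmetry group is $\langle H,V\rangle=\{R_0,H,V,R_{180}\}$ ($H$: reflection across the horizontal midline; $V$: across the vertical midline; $R_{180}$: 180-degree rotation); boards are equivalent if some element maps one to the other. The grid is divided into six regions: $\Lambda_1$ = rows $1..k$, cols $1..l$; $\Lambda_2$ = rows $1..k$, cols $l+2..2l+1$; $\Lambda_3$ = rows $k+1..2k$, cols $l+2..2l+1$; $\Lambda_4$ = rows $k+1..2k$, cols $1..l$; $\Delta_1$ = rows $1..k$, col $l+1$; $\Delta_2$ = rows $k+1..2k$, col $l+1$. The board partition $(\lambda_1,\lambda_2,\lambda_3,\lambda_4,\delta_1,\delta_2)$ records the number of blocked cells $\lambda_i$ in $\Lambda_i$ and $\delta_i$ in $\Delta_i$. *)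

(* Defs.v *)
From mathcomp Require Import all_boot.
Set Implicit Arguments. Unset Strict Implicit. Unset Printing Implicit Defensive.

(* Grid with 2k rows and 2l+1 columns; rows/cols are 0-indexed here:
   row i : 'I_(2k) corresponds to paper row i+1, column j to paper column j+1. *)
Definition cell (k l : nat) : finType := ('I_(2 * k) * 'I_(2 * l + 1))%type.

Definition is_board (k l r : nat) (B : {set cell k l}) : bool := #|B| == r.

(* Symmetries: H = reflection across horizontal midline (flips rows),
   V = reflection across vertical midline (flips columns).
   sym a b: flip rows iff a, flip columns iff b.
   R0 = sym false false, H = sym true false, V = sym false true,
   R180 = sym true true. *)
Definition sym (k l : nat) (a b : bool) (c : cell k l) : cell k l :=
  ((if a then rev_ord c.1 else c.1), (if b then rev_ord c.2 else c.2)).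

Definition equiv_boards (k l : nat) (B1 B2 : {set cell k l}) : Prop :=
  exists a b : bool, B2 = sym a b @: B1.

Definition top k (c : 'I_(2 * k)) : bool := (c < k)%N.
Definition leftc l (c : 'I_(2 * l + 1)) : bool := (c < l)%N.
Definition midc l (c : 'I_(2 * l + 1)) : bool := (c == l :> nat).
Definition rightc l (c : 'I_(2 * l + 1)) : bool := (l < c)%N.

Definition Lambda1 k l : {set cell k l} := [set c | top c.1 && leftc c.2].
Definition Lambda2 k l : {set cell k l} := [set c | top c.1 && rightc c.2].
Definition Lambda3 k l : {set cell k l} := [set c | ~~ top c.1 && rightc c.2].
Definition Lambda4 k l : {set cell k l} := [set c | ~~ top c.1 && leftc c.2].
Definition Delta1 k l : {set cell k l} := [set c | top c.1 && midc c.2].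
Definition Delta2 k l : {set cell k l} := [set c | ~~ top c.1 && midc c.2].

Definition partition_t := (nat * nat * nat * nat * nat * nat)%type.

Definition board_partition k l (B : {set cell k l}) : partition_t :=
  (#|B :&: Lambda1 k l|, #|B :&: Lambda2 k l|, #|B :&: Lambda3 k l|,
   #|B :&: Lambda4 k l|, #|B :&: Delta1 k l|, #|B :&: Delta2 k l|).

Definition good_partition (p : partition_t) : bool :=
  let: (l1, l2, l3, l4, d1, d2) := p in
  [&& (l2 <= l1) && (l3 <= l1) && (l4 <= l1),
      (l1 == l2) ==> (l4 <= l3),
      (l1 == l3) ==> ((l4 <= l2) && ((l2 == l4) ==> (d2 <= d1))) &
      (l1 == l4) ==> ((l3 <= l2) && ((l2 == l3) ==> (d2 <= d1)))].

Definition in_Bbar k l r (B : {set cell k l}) : bool :=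
  is_board r B && good_partition (board_partition B).

(* Main.v *)
Require Import Defs.
From mathcomp Require Import all_boot.
From mathcomp Require Import zify.

Definition permp (a b : bool) (p : partition_t) : partition_t :=
  let: (l1, l2, l3, l4, d1, d2) := p in
  match a, b with
  | false, false => (l1, l2, l3, l4, d1, d2)
  | true, false => (l4, l3, l2, l1, d2, d1)
  | false, true => (l2, l1, l4, l3, d1, d2)
  | true, true => (l3, l4, l1, l2, d2, d1)
  end.

Lemma sym_inv k l a b : involutive (@sym k l a b).
Proof.
case=> i j; rewrite /sym /=; congr pair.
  by case: a => //; apply: val_inj => /=; have := ltn_ord i; lia.
by case: b => //; apply: val_inj => /=; have := ltn_ord j; lia.
Qed.

Lemma card_sym k l a b (B S : {set cell k l}) :
  #|sym a b @: B :&: S| = #|B :&: sym a b @^-1: S|.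
Proof.
have inj := can_inj (@sym_inv k l a b).
suff -> : sym a b @: B :&: S = sym a b @: (B :&: sym a b @^-1: S).
  by rewrite card_imset.
apply/setP => x; apply/idP/idP.
  rewrite inE => /andP[/imsetP[y yB ->] yS].
  by apply/imsetP; exists y => //; rewrite !inE yB.
case/imsetP => y; rewrite !inE => /andP[yB yS] ->.
by rewrite yS andbT; apply/imsetP; exists y.
Qed.

Lemma top_rev k (i : 'I_(2 * k)) : top (rev_ord i) = ~~ top i.
Proof. rewrite /top /=; have := ltn_ord i; lia. Qed.
Lemma left_rev l (j : 'I_(2 * l + 1)) : leftc (rev_ord j) = rightc j.
Proof. rewrite /leftc /rightc /=; have := ltn_ord j; lia. Qed.
Lemma right_rev l (j : 'I_(2 * l + 1)) : rightc (rev_ord j) = leftc j.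
Proof. rewrite /leftc /rightc /=; have := ltn_ord j; lia. Qed.
Lemma mid_rev l (j : 'I_(2 * l + 1)) : midc (rev_ord j) = midc j.
Proof. rewrite /midc /=; have := ltn_ord j; lia. Qed.

Lemma partition_sym k l a b (B : {set cell k l}) :
  board_partition (sym a b @: B) = permp a b (board_partition B).
Proof.
rewrite /board_partition !card_sym /permp.
case: a; case: b; congr (_, _, _, _, _, _); apply: eq_card => c;
  rewrite !inE /sym ?top_rev ?left_rev ?right_rev ?mid_rev ?negbK //.
Qed.

Lemma card_symB k l a b (B : {set cell k l}) : #|sym a b @: B| = #|B|.
Proof. exact/card_imset/(can_inj (@sym_inv k l a b)). Qed.

Lemma exist_good (p : partition_t) : exists a b, good_partition (permp a b p).
Proof.
case: p => [[[[[l1 l2] l3] l4] d1] d2].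
have : good_partition (l1,l2,l3,l4,d1,d2) || good_partition (l4,l3,l2,l1,d2,d1)
   || good_partition (l2,l1,l4,l3,d1,d2) || good_partition (l3,l4,l1,l2,d2,d1).
  rewrite /good_partition; lia.
case/orP => [/orP[/orP[]|]|] H.
- by exists false, false.
- by exists true, false.
- by exists false, true.
- by exists true, true.
Qed.

Lemma uniq_good a b (p : partition_t) :
  good_partition p -> good_partition (permp a b p) -> permp a b p = p.
Proof.
case: p => [[[[[l1 l2] l3] l4] d1] d2].
case: a; case: b; rewrite /permp /good_partition => // H1 H2.
- have e1 : l1 = l3 by lia. have e2 : l2 = l4 by lia. have e3 : d1 = d2 by lia.
  by rewrite e1 e2 e3.
- have e1 : l1 = l4 by lia. have e2 : l2 = l3 by lia. have e3 : d1 = d2 by lia.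
  by rewrite e1 e2 e3.
- have e1 : l1 = l2 by lia. have e2 : l3 = l4 by lia.
  by rewrite e1 e2.
Qed.

Theorem theorem4p9 (k l r : nat) :
  (1 <= k)%N -> (1 <= l)%N -> (1 <= r)%N -> (r <= 2 * k * (2 * l + 1))%N ->
  (* (1) Bbar is a union of full fibres of the board-partition map *)
  (exists P : pred partition_t,
     forall B : {set cell k l},
       in_Bbar r B = is_board r B && P (board_partition B)) /\
  (* (2) every board is equivalent to a board of Bbar *)
  (forall B : {set cell k l}, is_board r B ->
     exists B' : {set cell k l}, in_Bbar r B' /\ equiv_boards B B') /\
  (* (3) equivalent boards of Bbar have the same board partition *)
  (forall B1 B2 : {set cell k l}, in_Bbar r B1 -> in_Bbar r B2 ->
     equiv_boards B1 B2 -> board_partition B1 = board_partition B2).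
Proof.
move=> _ _ _ _; split; first by exists good_partition.
split.
  move=> B HB; have [a [b Hg]] := exist_good (board_partition B).
  exists (sym a b @: B); split; last by exists a, b.
  by rewrite /in_Bbar /is_board card_symB partition_sym Hg andbT.
move=> B1 B2 /andP[_ H1] + [a [b E]]; rewrite E => /andP[_ H2].
move: H2; rewrite partition_sym => H2.
by rewrite (uniq_good a b _ H1 H2).
Qed.
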